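(* Let $k\ge 2$ and $n>2k$ be integers, $X=\{1,\dots,n\}$, $x\in X$, $\mathcal S_x=\left\{S\in\binom{X}{k}\colon x\in S\right\}$ and $\mathcal A=\left\{A\in\binom{X}{k}\colon |A\cap\{1,2,3\}|\ge 2\right\}$. Then $$|\mathcal I(\mathcal S_x)|<\tfrac23\,|\mathcal I(\mathcal A)|.$$
   Context: $\binom{X}{k}$ denotes the family of all $k$-element subsets of $X$. For a family $\mathcal F$, $\mathcal I(\mathcal F):=\{F\cap F'\colon F,F'\in\mathcal F,\ F\neq F'\}$. *)

(* Defs.v *)
From mathcomp Require Import all_boot.
Set Implicit Arguments. Unset Strict Implicit. Unset Printing Implicit Defensive.

Definition ksets (T : finType) (k : nat) : {set {set T}} :=
  [set S : {set T} | #|S| == k].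

Definition interfam (T : finType) (F : {set {set T}}) : {set {set T}} :=
  [set A :&: B | A in F, B in F & A != B].

(* Ground set X = {1..n} is modelled by 'I_n = {0..n-1}; element i+1 <-> i. *)

Definition star (n k : nat) (x : 'I_n) : {set {set 'I_n}} :=
  [set S in ksets 'I_n k | x \in S].

(* {1,2,3} corresponds to {0,1,2} in 'I_n *)
Definition first3 (n : nat) : {set 'I_n} := [set i : 'I_n | (i < 3)%N].

Definition famA (n k : nat) : {set {set 'I_n}} :=
  [set A in ksets 'I_n k | (2 <= #|A :&: first3 n|)%N].

(* Main.v *)
Require Import Defs.
From mathcomp Require Import all_boot zify perm.
Set Implicit Arguments. Unset Strict Implicit. Unset Printing Implicit Defensive.

Lemma card_first3 n : 3 <= n -> #|first3 n| = 3.
Proof.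
move=> h.
have -> : first3 n = [set widen_ord h j | j in 'I_3].
  apply/setP => i; rewrite inE; apply/idP/imsetP.
    by move=> hi; exists (Ordinal hi) => //; apply: val_inj.
  by case=> j _ ->; rewrite /= ltn_ord.
by rewrite card_imset ?card_ord //; by move=> u v /(congr1 val) /= e; apply: val_inj.
Qed.

Lemma sub_compl (T : finType) (D A : {set T}) : D \subset ~: A -> D :&: A = set0.
Proof.
move=> sD; apply/setP => y; rewrite !inE; case yD: (y \in D) => //=.
by move/subsetP: sD => /(_ y yD); rewrite inE => /negbTE.
Qed.

Lemma finish n k (T D1 D2 : {set 'I_n}) : #|T| < k ->
  D1 :&: T = set0 -> D2 :&: T = set0 -> D1 :&: D2 = set0 ->
  #|D1| = k - #|T| -> #|D2| = k - #|T| ->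
  2 <= #|(T :|: D1) :&: first3 n| -> 2 <= #|(T :|: D2) :&: first3 n| ->
  T \in interfam (famA n k).
Proof.
move=> cT d1 d2 d12 c1 c2 f1 f2.
have cU : forall D : {set 'I_n}, D :&: T = set0 -> #|D| = k - #|T| -> #|T :|: D| = k.
  move=> D dD cD; rewrite cardsU setIC dD cards0 subn0 cD; lia.
have eI : (T :|: D1) :&: (T :|: D2) = T by rewrite -setUIr d12 setU0.
apply/imset2P; exists (T :|: D1) (T :|: D2) => //.
  by rewrite /famA /ksets !inE cU // eqxx.
rewrite /famA /ksets !inE cU // eqxx f2 /=.
apply/eqP => e; move: eI; rewrite -e setIid => e2.
by move: (cU D1 d1 c1); rewrite e2; lia.
Qed.
Lemma pick_sub (T : finType) (A : {set T}) m :
  m <= #|A| -> exists B : {set T}, B \subset A /\ #|B| = m.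
Proof.
elim: m => [|m IH] h.
  by exists set0; rewrite sub0set cards0.
have [B [sB cB]] := IH (ltnW h).
have: B \proper A by rewrite properEcard sB cB h.
case/properP => _ [y yA yB].
exists (y |: B); split; first by rewrite subUset sub1set yA sB.
by rewrite cardsU1 yB cB.
Qed.

Lemma two_disj (T:finType) (Z P1 P2 : {set T}) m :
  P1 \subset Z -> P2 \subset Z -> P1 :&: P2 = set0 ->
  #|P1| <= m -> #|P2| <= m -> 2*m <= #|Z| ->
  exists D1 D2 : {set T}, (P1 \subset D1) /\ (P2 \subset D2) /\ (D1 \subset Z) /\ (D2 \subset Z) /\
     (D1 :&: D2 = set0) /\ (#|D1| = m) /\ (#|D2| = m).
Proof.
move=> s1 s2 d12 c1 c2 cZ.
set Z' := Z :\: (P1 :|: P2).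
have cP : #|P1 :|: P2| = #|P1| + #|P2| by rewrite cardsU d12 cards0 subn0.
have cZ' : #|Z'| = #|Z| - (#|P1| + #|P2|).
  by rewrite /Z' cardsD (setIidPr _) ?cP // subUset s1 s2.
have [E1 [sE1 cE1]] := @pick_sub _ Z' (m - #|P1|) ltac:(lia).
have [E2 [sE2 cE2]] := @pick_sub _ (Z' :\: E1) (m - #|P2|)
   ltac:(rewrite cardsD (setIidPr sE1); lia).
have key : forall y, [/\ (y \in P1 :&: P2) = false,
   y \in E1 -> [&& y \in Z, y \notin P1 & y \notin P2] &
   y \in E2 -> [&& y \in Z, y \notin P1, y \notin P2 & y \notin E1]].
  move=> y; split; first by rewrite d12 inE.
    move/(subsetP sE1); rewrite !inE negb_or.
  by move=> /andP[/andP[a b] c]; rewrite a b c.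
  move/(subsetP sE2); rewrite !inE negb_or.
  by move=> /andP[d /andP[/andP[a b] c]]; rewrite a b c d.
have dPE : forall P E : {set T}, (forall y, y \in P -> y \in E -> False) -> #|P :|: E| = #|P| + #|E|.
  move=> P E h; rewrite cardsU; suff -> : P :&: E = set0 by rewrite cards0 subn0.
  apply/setP=> y; rewrite !inE; apply/negbTE/andP => [[a b]]; exact: h y a b.
exists (P1 :|: E1), (P2 :|: E2).
split; first exact: subsetUl.
split; first exact: subsetUl.
split. rewrite subUset s1 /=; apply/subsetP => y; case: (key y) => _ h _ /h /and3P []. by [].
split. rewrite subUset s2 /=; apply/subsetP => y; case: (key y) => _ _ h /h /and4P []. by [].
split. apply/setP => y; rewrite !inE; case: (key y) => h1 h2 h3.
  apply/negbTE/andP => [[/orP[a|a] /orP[b|b]]].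
  - by rewrite inE a b in h1.
  - by case/and4P: (h3 b); rewrite a.
  - by case/and3P: (h2 a); rewrite b.
  - by case/and4P: (h3 b); rewrite a.
split. rewrite dPE; first lia. by move=> y a; case: (key y) => _ h _ /h /and3P []; rewrite a.
rewrite dPE; first lia. by move=> y a; case: (key y) => _ _ h /h /and4P []; rewrite a.
Qed.

Lemma in_IA n k (T : {set 'I_n}) : 2 * k < n -> #|T| < k ->
  T :&: first3 n != set0 -> T \in interfam (famA n k).
Proof.
move=> nk cT /set0Pn [a aTF].
have F3 := card_first3 (n := n) ltac:(lia).
have cZ : #|~: T| = n - #|T| by have := cardsC T; rewrite card_ord; lia.
have [h2|h1] := leqP 2 #|T :&: first3 n|.
  have [D1 [D2 [_ [_ [s1 [s2 [d12 [c1 c2]]]]]]]] :=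
    @two_disj _ (~: T) set0 set0 (k - #|T|) (sub0set _) (sub0set _) (set0I _)
      ltac:(rewrite cards0; lia) ltac:(rewrite cards0; lia) ltac:(lia).
  apply: (finish cT (sub_compl s1) (sub_compl s2) d12 c1 c2).
    by apply: leq_trans h2 _; apply: subset_leq_card; apply: setSI; apply: subsetUl.
  by apply: leq_trans h2 _; apply: subset_leq_card; apply: setSI; apply: subsetUl.
have c1F : #|T :&: first3 n| = 1.
  have : 0 < #|T :&: first3 n| by apply/card_gt0P; exists a.
  lia.
have : #|first3 n :\: T| == 2 by rewrite cardsD F3 setIC c1F.
case/cards2P => b [c [bc e]].
have bF : b \in first3 n :\: T by rewrite e !inE eqxx.
have cF : c \in first3 n :\: T by rewrite e !inE eqxx orbT.
move: bF cF; rewrite !inE => /andP [bT bF] /andP [cT' cF].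
move: aTF; rewrite inE => /andP [aT aF].
rewrite !inE in aF bF cF.
have [D1 [D2 [p1 [p2 [s1 [s2 [d12 [c1 c2]]]]]]]] :=
  @two_disj _ (~: T) [set b] [set c] (k - #|T|)
    ltac:(by rewrite sub1set inE) ltac:(by rewrite sub1set inE)
    ltac:(by apply/setP => y; rewrite !inE; apply/negbTE/andP => [[/eqP -> /eqP e2]]; move: bc; rewrite e2 eqxx)
    ltac:(rewrite cards1; lia) ltac:(rewrite cards1; lia) ltac:(lia).
apply: (finish cT (sub_compl s1) (sub_compl s2) d12 c1 c2).
  have ab : a != b by apply: contraNneq bT => <-.
  apply: (@leq_trans #|[set a; b]|); first by rewrite cards2 ab.
  apply: subset_leq_card; apply/subsetP => y; rewrite !inE => /orP [] /eqP ->.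
    by rewrite aT aF.
  by rewrite bF (subsetP p1) ?orbT // inE.
have ac : a != c by apply: contraNneq cT' => <-.
apply: (@leq_trans #|[set a; c]|); first by rewrite cards2 ac.
apply: subset_leq_card; apply/subsetP => y; rewrite !inE => /orP [] /eqP ->.
  by rewrite aT aF.
by rewrite cF (subsetP p2) ?orbT // inE.
Qed.
Lemma inj_le (T : finType) (F G : {set T}) (f : T -> T) :
  {in F &, injective f} -> (forall x, x \in F -> f x \in G) -> #|F| <= #|G|.
Proof.
move=> inj h; rewrite -(card_in_imset inj); apply: subset_leq_card.
by apply/subsetP => y /imsetP [z hz ->]; exact: h.
Qed.

Lemma star_transport n k (x y : 'I_n) :
  #|[set T : {set 'I_n} | (x \in T) && (#|T| < k)]| <=
  #|[set T : {set 'I_n} | (y \in T) && (#|T| < k)]|.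
Proof.
refine (@inj_le _ _ _ (fun T : {set 'I_n} => [set tperm x y i | i in T]) _ _).
  by move=> A B _ _; apply: imset_inj; exact: perm_inj.
move=> T; rewrite !inE => /andP [xT cT]; rewrite card_imset ?cT ?andbT;
  last exact: perm_inj.
by apply/imsetP; exists x => //; rewrite tpermL.
Qed.

Lemma swap_le n k (a b : 'I_n) :
  #|[set T : {set 'I_n} | [&& a \in T, b \notin T & #|T| < k]]| <=
  #|[set T : {set 'I_n} | [&& b \in T, a \notin T & #|T| < k]]|.
Proof.
have memf : forall i (T : {set 'I_n}), (tperm a b i \in [set tperm a b j | j in T]) = (i \in T).
  by move=> i T; rewrite mem_imset //; exact: perm_inj.
apply: (@inj_le _ _ _ (fun T : {set 'I_n} => [set tperm a b i | i in T])).
  by move=> A B _ _; apply: imset_inj; exact: perm_inj.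
move=> T; rewrite !inE => /and3P [aT bT cT]; rewrite card_imset ?cT ?andbT;
  last exact: perm_inj.
have := memf a T; rewrite tpermL => ->; have := memf b T; rewrite tpermR => ->.
by rewrite aT bT.
Qed.

Lemma strict n k (a b : 'I_n) : a != b -> 2 <= k -> k <= n ->
  #|[set T : {set 'I_n} | [&& a \in T, b \in T & #|T| < k]]| <
  #|[set T : {set 'I_n} | [&& a \in T, b \notin T & #|T| < k]]|.
Proof.
move=> ab k2 kn.
set F := [set T : {set 'I_n} | _]; set G := [set T : {set 'I_n} | _].
have inj : {in F &, injective (fun T => T :\ b)}.
  move=> A B; rewrite !inE => /and3P[_ bA _] /and3P[_ bB _] e.
  by rewrite -(setD1K bA) -(setD1K bB) e.
rewrite -(card_in_imset inj); apply: proper_card; apply/properP; split.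
  apply/subsetP => y /imsetP [T]; rewrite !inE => /and3P[aT bT cT] ->.
  rewrite !inE eqxx aT (negbTE ab) /=.
  by move: cT; rewrite (cardsD1 b T) bT add1n; apply: ltnW.
have cC : #|~: [set a; b]| = n - 2.
  by have := cardsC [set a; b]; rewrite cards2 ab card_ord; lia.
have [B [sB cB]] := @pick_sub _ (~: [set a; b]) (k - 2) ltac:(lia).
have aB : a \notin B by apply/negP => /(subsetP sB); rewrite !inE eqxx.
have bB : b \notin B by apply/negP => /(subsetP sB); rewrite !inE eqxx orbT.
have cW : #|a |: B| = k - 1 by rewrite cardsU1 aB cB; lia.
exists (a |: B).
  by rewrite !inE eqxx /= cW eq_sym (negbTE ab) /= bB; lia.
apply/imsetP => [[T]]; rewrite !inE => /and3P[aT bT cT] e.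
by move: cT cW; rewrite e (cardsD1 b T) bT /=; lia.
Qed.
Lemma star_sub n k (x : 'I_n) :
  interfam (star k x) \subset [set T : {set 'I_n} | (x \in T) && (#|T| < k)].
Proof.
apply/subsetP => T /imset2P [A B hA hB ->].
rewrite /star /ksets !inE in hA hB *.
case/andP: hA => /eqP cA xA; case/andP: hB => /andP[/eqP cB xB] nAB.
rewrite xA xB /= ltn_neqAle.
have [le eq] := subset_leqif_cards (subsetIl A B).
rewrite -cA le andbT eq; apply: contra nAB => /eqP h.
rewrite eqEcard cA cB leqnn andbT; apply/subsetP => y yA.
by move: yA; rewrite -h inE => /andP[].
Qed.

Theorem mainTheorem3 (k n : nat) (x : 'I_n) :
  (2 <= k)%N -> (2 * k < n)%N ->
  (3 * #|interfam (star k x)| < 2 * #|interfam (famA n k)|)%N.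
Proof.
move=> k2 nk.
have h0 : 0 < n by lia.
have h1 : 1 < n by lia.
pose i0 : 'I_n := Ordinal h0.
pose i1 : 'I_n := Ordinal h1.
have i01 : i0 != i1 by [].
have s1 := subset_leq_card (star_sub k x).
have s2 := star_transport k x i0.
have s3 := @strict n k i0 i1 i01 k2 ltac:(lia).
have s4 := swap_le k i0 i1.
have e0 : #|[set T : {set 'I_n} | (i0 \in T) && (#|T| < k)]| =
   #|[set T : {set 'I_n} | [&& i0 \in T, i1 \in T & #|T| < k]]| +
   #|[set T : {set 'I_n} | [&& i0 \in T, i1 \notin T & #|T| < k]]|.
  rewrite -(cardsID [set T : {set 'I_n} | i1 \in T]); congr (_ + _); apply: eq_card => T; rewrite !inE;
  by case: (i0 \in T); case: (i1 \in T); case: (#|T| < k).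
have s5 : #|[set T : {set 'I_n} | (i0 \in T) && (#|T| < k)]| +
   #|[set T : {set 'I_n} | [&& i1 \in T, i0 \notin T & #|T| < k]]| <=
   #|interfam (famA n k)|.
  set Q := [set T : {set 'I_n} | (#|T| < k) && ((i0 \in T) || (i1 \in T))].
  have -> : #|[set T : {set 'I_n} | (i0 \in T) && (#|T| < k)]| +
   #|[set T : {set 'I_n} | [&& i1 \in T, i0 \notin T & #|T| < k]]| = #|Q|.
    rewrite -(cardsID [set T : {set 'I_n} | i0 \in T] Q); congr (_ + _); apply: eq_card => T; rewrite !inE;
    by case: (i0 \in T); case: (i1 \in T); case: (#|T| < k).
  apply: subset_leq_card; apply/subsetP => T; rewrite inE => /andP [cT hT].
  apply: in_IA => //; apply/set0Pn.
  case/orP: hT => h; [exists i0 | exists i1]; by rewrite !inE h.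
move: s1 s2 s3 s4 e0 s5.
set I1 := #|interfam (star k x)|. set I2 := #|interfam (famA n k)|.
set Px := #|[set T : {set 'I_n} | (x \in T) && (#|T| < k)]|.
set P0 := #|[set T : {set 'I_n} | (i0 \in T) && (#|T| < k)]|.
set p := #|[set T : {set 'I_n} | [&& i0 \in T, i1 \in T & #|T| < k]]|.
set q := #|[set T : {set 'I_n} | [&& i0 \in T, i1 \notin T & #|T| < k]]|.
set g := #|[set T : {set 'I_n} | [&& i1 \in T, i0 \notin T & #|T| < k]]|.
move=> s1 s2 s3 s4 e0 s5.
lia.
Qed.
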